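(* Let $m\ge0$ be an integer and $\gamma\ge m+\frac32$, and let $g_{m,\gamma}(x)=(x+1)^m(3-2x)^{-\gamma}$ for $x\in[-1,1]$. Then for all $x\in[-1,1]$, $$I_+^{\gamma-m-3/2}g_{m,\gamma}(x)=\sqrt{\frac\pi5}\,\frac{\Gamma(\gamma-\frac12)}{\Gamma(\gamma)}\,(x+1)^{m+1}(3-2x)^{-(\gamma-1/2)}.$$ In particular, for $\lambda\ge0$ and $\varphi_{2\lambda+3}(\tau)=(3-2\tau)^{-(2\lambda+3)/2}$, $I^\lambda_+\varphi_{2\lambda+3}(x)=\sqrt{\frac\pi5}\frac{\Gamma(\lambda+1)}{\Gamma(\lambda+\frac32)}(x+1)(3-2x)^{-(\lambda+1)}$.
   Context: For $f\in L^1[-1,1]$ and $\mu\ge0$, $I^\mu_+f(x)=(1+x)^{-\mu+1/2}\int_{-1}^x(x-\tau)^{-1/2}(1+\tau)^\mu f(\tau)\,d\tau$. *)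

(* Defs.v *)
From Stdlib Require Import Reals Lra ClassicalEpsilon.
Open Scope R_scope.

Definition improper_int_ab (f : R -> R) (a b L : R) : Prop :=
  (forall u v, a < u -> u <= v -> v < b -> inhabited (Riemann_integrable f u v)) /\
  (forall eps, eps > 0 -> exists delta, delta > 0 /\
     forall u v (pr : Riemann_integrable f u v),
       a < u -> u < a + delta -> b - delta < v -> v < b ->
       Rabs (RiemannInt pr - L) < eps).

Definition improper_int_a_inf (f : R -> R) (a L : R) : Prop :=
  (forall u v, a < u -> u <= v -> inhabited (Riemann_integrable f u v)) /\
  (forall eps, eps > 0 -> exists delta M, delta > 0 /\
     forall u v (pr : Riemann_integrable f u v),
       a < u -> u < a + delta -> M < v ->
       Rabs (RiemannInt pr - L) < eps).

(* Euler's Gamma function Gamma(s) = int_0^oo t^(s-1) e^(-t) dt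
   (the value is chosen by epsilon; it exists and is unique for s > 0). *)
Definition Gamma (s : R) : R :=
  epsilon (inhabits 0)
    (fun L => improper_int_a_inf (fun t => Rpower t (s - 1) * exp (- t)) 0 L).

(* "I^mu_+ f (x) = V": the defining integral exists (as an improper
   integral, integrands here are nonnegative) and the value equals V. *)
Definition I_plus_eq (mu : R) (f : R -> R) (x V : R) : Prop :=
  exists J,
    improper_int_ab
      (fun t => Rpower (x - t) (- (1/2)) * Rpower (1 + t) mu * f t) (-1) x J
    /\ Rpower (1 + x) (- mu + 1/2) * J = V.

Definition g_fun (m : nat) (gam : R) (x : R) : R :=
  (x + 1) ^ m * Rpower (3 - 2 * x) (- gam).

Definition phi_fun (lam : R) (t : R) : R :=
  Rpower (3 - 2 * t) (- ((2 * lam + 3) / 2)).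

(* Main.v *)
Require Import Defs.
From Stdlib Require Import Reals Lra ClassicalEpsilon FunctionalExtensionality.
From Coquelicot Require Import Coquelicot.
Open Scope R_scope.

Definition cont_on (f : R -> R) a b := forall y, a < y < b -> continuous f y.
Definition limr (F : R -> R) a L := forall eps, 0 < eps -> exists d, 0 < d /\
   forall y, a < y < a + d -> Rabs (F y - L) < eps.
Definition liml (F : R -> R) b L := forall eps, 0 < eps -> exists d, 0 < d /\
   forall y, b - d < y < b -> Rabs (F y - L) < eps.
Definition limi (F : R -> R) L := forall eps, 0 < eps -> exists M,
   forall y, M < y -> Rabs (F y - L) < eps.

Definition IMP f a b L :=
  (forall u v, a < u -> u <= v -> v < b -> ex_RInt f u v) /\
  (forall eps, 0 < eps -> exists d, 0 < d /\ forall u v,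
      a < u < a + d -> b - d < v < b -> Rabs (RInt f u v - L) < eps).
Definition IMPI f a L :=
  (forall u v, a < u -> u <= v -> ex_RInt f u v) /\
  (forall eps, 0 < eps -> exists d M, 0 < d /\ forall u v,
      a < u < a + d -> M < v -> Rabs (RInt f u v - L) < eps).

Lemma exRI f a b u v : cont_on f a b -> a < u < b -> a < v < b -> ex_RInt f u v.
Proof.
intros Hc Hu Hv; apply (@ex_RInt_continuous R_CompleteNormedModule); intros z Hz; apply Hc.
split.
- apply Rlt_le_trans with (Rmin u v); [|lra]. apply Rmin_glb_lt; lra.
- apply Rle_lt_trans with (Rmax u v); [lra|]. apply Rmax_lub_lt; lra.
Qed.

Lemma exRIi (f : R -> R) a u v : (forall y, a < y -> continuous f y) -> a < u -> a < v -> ex_RInt f u v.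
Proof.
intros Hc Hu Hv; apply (@ex_RInt_continuous R_CompleteNormedModule); intros z Hz; apply Hc.
apply Rlt_le_trans with (Rmin u v); [|lra]. apply Rmin_glb_lt; lra.
Qed.

Lemma RInt_ftc (f F : R -> R) u v : (forall y, Rmin u v <= y <= Rmax u v -> is_derive F y (f y)) ->
  (forall y, Rmin u v <= y <= Rmax u v -> continuous f y) -> RInt f u v = F v - F u.
Proof.
intros Hd Hc. apply (@is_RInt_unique R_CompleteNormedModule). apply (@is_RInt_derive R_CompleteNormedModule F f); auto.
Qed.

Lemma mm_in a b u v : a < u < b -> a < v < b -> forall y, Rmin u v <= y <= Rmax u v -> a < y < b.
Proof.
intros Hu Hv y Hy. split.
- apply Rlt_le_trans with (Rmin u v); [|lra]. apply Rmin_glb_lt; lra.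
- apply Rle_lt_trans with (Rmax u v); [lra|]. apply Rmax_lub_lt; lra.
Qed.

Lemma IMP_ftc (f F : R -> R) a b La Lb : a < b ->
  (forall y, a < y < b -> is_derive F y (f y)) -> cont_on f a b ->
  limr F a La -> liml F b Lb -> IMP f a b (Lb - La).
Proof.
intros Hab Hd Hc Ha Hb. split.
- intros u v Hu Huv Hv. apply (exRI f a b); auto; lra.
- intros eps He. destruct (Ha (eps/2)) as [d1 [Hd1 H1]]; [lra|].
  destruct (Hb (eps/2)) as [d2 [Hd2 H2]]; [lra|].
  exists (Rmin (Rmin d1 d2) (b - a)). split.
  { apply Rmin_glb_lt; [apply Rmin_glb_lt|]; lra. }
  intros u v Hu Hv.
  assert (m1 := Rmin_l (Rmin d1 d2) (b-a)). assert (m2 := Rmin_r (Rmin d1 d2) (b-a)).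
  assert (m3 := Rmin_l d1 d2). assert (m4 := Rmin_r d1 d2).
  rewrite (RInt_ftc f F).
  + specialize (H1 u ltac:(lra)). specialize (H2 v ltac:(lra)).
    replace (F v - F u - (Lb - La)) with ((F v - Lb) - (F u - La)) by ring.
    eapply Rle_lt_trans; [apply Rabs_triang|]. rewrite Rabs_Ropp. lra.
  + intros y Hy; apply Hd. apply (mm_in a b u v); auto; lra.
  + intros y Hy; apply Hc. apply (mm_in a b u v); auto; lra.
Qed.

Lemma IMPI_ftc (f F : R -> R) a La Lb :
  (forall y, a < y -> is_derive F y (f y)) -> (forall y, a < y -> continuous f y) ->
  limr F a La -> limi F Lb -> IMPI f a (Lb - La).
Proof.
intros Hd Hc Ha Hb. split.
- intros u v Hu Huv. apply (exRIi f a); auto; lra.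
- intros eps He. destruct (Ha (eps/2)) as [d1 [Hd1 H1]]; [lra|].
  destruct (Hb (eps/2)) as [M H2]; [lra|].
  exists d1, (Rmax M a). split; auto.
  intros u v Hu Hv.
  assert (m1 := Rmax_l M a). assert (m2 := Rmax_r M a).
  rewrite (RInt_ftc f F).
  + specialize (H1 u ltac:(lra)). specialize (H2 v ltac:(lra)).
    replace (F v - F u - (Lb - La)) with ((F v - Lb) - (F u - La)) by ring.
    eapply Rle_lt_trans; [apply Rabs_triang|]. rewrite Rabs_Ropp. lra.
  + intros y Hy; apply Hd. apply Rlt_le_trans with (Rmin u v); [|lra]. apply Rmin_glb_lt; lra.
  + intros y Hy; apply Hc. apply Rlt_le_trans with (Rmin u v); [|lra]. apply Rmin_glb_lt; lra.
Qed.
Lemma RInt_lin (f g : R -> R) u v p q : ex_RInt f u v -> ex_RInt g u v ->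
  RInt (fun t => p * f t + q * g t) u v = p * RInt f u v + q * RInt g u v.
Proof.
intros Hf Hg.
rewrite (@RInt_plus R_CompleteNormedModule (fun t => p * f t) (fun t => q * g t)).
- assert (E1 : RInt (fun t => p * f t) u v = p * RInt f u v) by exact (@RInt_scal R_CompleteNormedModule f u v p Hf).
  assert (E2 : RInt (fun t => q * g t) u v = q * RInt g u v) by exact (@RInt_scal R_CompleteNormedModule g u v q Hg).
  change (RInt (fun t : R => p * f t) u v + RInt (fun t : R => q * g t) u v = p * RInt f u v + q * RInt g u v).
  rewrite E1, E2. reflexivity.
- apply (@ex_RInt_scal R_NormedModule f u v p Hf).
- apply (@ex_RInt_scal R_NormedModule g u v q Hg).
Qed.

Lemma ex_RInt_lin (f g : R -> R) u v p q : ex_RInt f u v -> ex_RInt g u v ->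
  ex_RInt (fun t => p * f t + q * g t) u v.
Proof.
intros Hf Hg.
apply (@ex_RInt_plus R_NormedModule (fun t => p * f t) (fun t => q * g t)).
- apply (@ex_RInt_scal R_NormedModule f u v p Hf).
- apply (@ex_RInt_scal R_NormedModule g u v q Hg).
Qed.

Lemma pts a b d u0 v0 : a < b -> 0 < d -> a < u0 -> v0 < b ->
  exists u v, a < u < a + d /\ b - d < v < b /\ u <= v /\ u < u0 /\ v0 < v.
Proof.
intros Hab Hd Hu0 Hv0.
set (e1 := Rmin (Rmin d (u0 - a)) ((b - a)/2)).
set (e2 := Rmin (Rmin d (b - v0)) ((b - a)/2)).
assert (A1 := Rmin_l (Rmin d (u0 - a)) ((b - a)/2)).
assert (A2 := Rmin_r (Rmin d (u0 - a)) ((b - a)/2)).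
assert (A3 := Rmin_l d (u0 - a)). assert (A4 := Rmin_r d (u0 - a)).
assert (B1 := Rmin_l (Rmin d (b - v0)) ((b - a)/2)).
assert (B2 := Rmin_r (Rmin d (b - v0)) ((b - a)/2)).
assert (B3 := Rmin_l d (b - v0)). assert (B4 := Rmin_r d (b - v0)).
assert (P1 : 0 < e1). { apply Rmin_glb_lt; [apply Rmin_glb_lt|]; lra. }
assert (P2 : 0 < e2). { apply Rmin_glb_lt; [apply Rmin_glb_lt|]; lra. }
fold e1 e2 in A1, A2, B1, B2.
exists (a + e1/2), (b - e2/2). lra.
Qed.

Lemma pts_i a d M u0 v0 : 0 < d -> a < u0 ->
  exists u v, a < u < a + d /\ M < v /\ u <= v /\ u < u0 /\ v0 < v.
Proof.
intros Hd Hu0.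
set (e1 := Rmin d (u0 - a)).
assert (A3 := Rmin_l d (u0 - a)). assert (A4 := Rmin_r d (u0 - a)).
assert (P1 : 0 < e1). { apply Rmin_glb_lt; lra. }
fold e1 in A3, A4.
exists (a + e1/2), (Rmax (Rmax M v0) (a + e1/2) + 1).
assert (C1 := Rmax_l (Rmax M v0) (a + e1/2)). assert (C2 := Rmax_r (Rmax M v0) (a + e1/2)).
assert (C3 := Rmax_l M v0). assert (C4 := Rmax_r M v0). lra.
Qed.

Lemma IMP_unique f a b L1 L2 : a < b -> IMP f a b L1 -> IMP f a b L2 -> L1 = L2.
Proof.
intros Hab [_ H1] [_ H2].
destruct (Req_dec L1 L2) as [E|N]; auto.
assert (He : 0 < Rabs (L1 - L2) / 2). { apply Rcomplements.Rdiv_lt_0_compat; [|lra]. apply Rabs_pos_lt; lra. }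
destruct (H1 _ He) as [d1 [Hd1 K1]]. destruct (H2 _ He) as [d2 [Hd2 K2]].
assert (Hd : 0 < Rmin d1 d2) by (apply Rmin_glb_lt; lra).
destruct (pts a b (Rmin d1 d2) b a) as [u [v [Hu [Hv _]]]]; auto; try lra.
assert (m1 := Rmin_l d1 d2). assert (m2 := Rmin_r d1 d2).
specialize (K1 u v ltac:(lra) ltac:(lra)). specialize (K2 u v ltac:(lra) ltac:(lra)).
exfalso. assert (Rabs (L1 - L2) <= Rabs (RInt f u v - L2) + Rabs (RInt f u v - L1)).
{ replace (L1 - L2) with ((RInt f u v - L2) - (RInt f u v - L1)) by ring.
  eapply Rle_trans; [apply Rabs_triang|]. rewrite Rabs_Ropp. lra. }
lra.
Qed.

Lemma IMPI_unique f a L1 L2 : IMPI f a L1 -> IMPI f a L2 -> L1 = L2.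
Proof.
intros [_ H1] [_ H2].
destruct (Req_dec L1 L2) as [E|N]; auto.
assert (He : 0 < Rabs (L1 - L2) / 2). { apply Rcomplements.Rdiv_lt_0_compat; [|lra]. apply Rabs_pos_lt; lra. }
destruct (H1 _ He) as [d1 [M1 [Hd1 K1]]]. destruct (H2 _ He) as [d2 [M2 [Hd2 K2]]].
assert (Hd : 0 < Rmin d1 d2) by (apply Rmin_glb_lt; lra).
destruct (pts_i a (Rmin d1 d2) (Rmax M1 M2) (a+1) 0) as [u [v [Hu [Hv _]]]]; auto; try lra.
assert (m1 := Rmin_l d1 d2). assert (m2 := Rmin_r d1 d2).
assert (m3 := Rmax_l M1 M2). assert (m4 := Rmax_r M1 M2).
specialize (K1 u v ltac:(lra) ltac:(lra)). specialize (K2 u v ltac:(lra) ltac:(lra)).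
exfalso. assert (Rabs (L1 - L2) <= Rabs (RInt f u v - L2) + Rabs (RInt f u v - L1)).
{ replace (L1 - L2) with ((RInt f u v - L2) - (RInt f u v - L1)) by ring.
  eapply Rle_trans; [apply Rabs_triang|]. rewrite Rabs_Ropp. lra. }
lra.
Qed.

Lemma abs_lin_bound p q x y e : Rabs x < e / (2 * (Rabs p + 1)) -> Rabs y < e / (2 * (Rabs q + 1)) ->
  0 < e -> Rabs (p * x + q * y) < e.
Proof.
intros Hx Hy He.
assert (P1 : 0 < Rabs p + 1) by (generalize (Rabs_pos p); lra).
assert (P2 : 0 < Rabs q + 1) by (generalize (Rabs_pos q); lra).
assert (Rabs (p * x) <= e/2).
{ rewrite Rabs_mult. apply Rle_trans with ((Rabs p + 1) * (e / (2 * (Rabs p + 1)))).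
  - apply Rmult_le_compat; try apply Rabs_pos; lra.
  - apply Req_le; field; lra. }
assert (Rabs (q * y) <= e/2).
{ rewrite Rabs_mult. apply Rle_trans with ((Rabs q + 1) * (e / (2 * (Rabs q + 1)))).
  - apply Rmult_le_compat; try apply Rabs_pos; lra.
  - apply Req_le; field; lra. }
assert (Rabs (q*y) < e/2 \/ Rabs (p*x) < e/2).
{ destruct (Req_dec q 0) as [Z|Z].
  - left. subst q. rewrite Rmult_0_l, Rabs_R0. lra.
  - left. rewrite Rabs_mult. apply Rle_lt_trans with (Rabs q * (e / (2 * (Rabs q + 1)))).
    + apply Rmult_le_compat_l; [apply Rabs_pos|lra].
    + apply Rlt_le_trans with ((Rabs q + 1) * (e / (2 * (Rabs q + 1)))).
      * apply Rmult_lt_compat_r; [|lra]. apply Rcomplements.Rdiv_lt_0_compat; lra.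
      * apply Req_le; field; lra. }
eapply Rle_lt_trans; [apply Rabs_triang|]. lra.
Qed.

Lemma IMP_lin f g a b L1 L2 p q : a < b -> IMP f a b L1 -> IMP g a b L2 ->
  IMP (fun t => p * f t + q * g t) a b (p * L1 + q * L2).
Proof.
intros Hab [E1 H1] [E2 H2]. split.
- intros u v Hu Huv Hv. apply ex_RInt_lin; auto.
- intros eps He.
  assert (P1 : 0 < Rabs p + 1) by (generalize (Rabs_pos p); lra).
  assert (P2 : 0 < Rabs q + 1) by (generalize (Rabs_pos q); lra).
  destruct (H1 (eps / (2 * (Rabs p + 1)))) as [d1 [Hd1 K1]].
  { apply Rcomplements.Rdiv_lt_0_compat; lra. }
  destruct (H2 (eps / (2 * (Rabs q + 1)))) as [d2 [Hd2 K2]].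
  { apply Rcomplements.Rdiv_lt_0_compat; lra. }
  exists (Rmin (Rmin d1 d2) ((b-a)/2)). split.
  { apply Rmin_glb_lt; [apply Rmin_glb_lt|]; lra. }
  intros u v Hu Hv.
  assert (m1 := Rmin_l (Rmin d1 d2) ((b-a)/2)). assert (m2 := Rmin_r (Rmin d1 d2) ((b-a)/2)).
  assert (m3 := Rmin_l d1 d2). assert (m4 := Rmin_r d1 d2).
  rewrite RInt_lin by (first [apply E1|apply E2]; lra).
  replace (p * RInt f u v + q * RInt g u v - (p * L1 + q * L2)) with
    (p * (RInt f u v - L1) + q * (RInt g u v - L2)) by ring.
  apply abs_lin_bound; auto.
  + apply K1; lra.
  + apply K2; lra.
Qed.

Lemma IMPI_lin f g a L1 L2 p q : IMPI f a L1 -> IMPI g a L2 ->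
  IMPI (fun t => p * f t + q * g t) a (p * L1 + q * L2).
Proof.
intros [E1 H1] [E2 H2]. split.
- intros u v Hu Huv. apply ex_RInt_lin; auto.
- intros eps He.
  assert (P1 : 0 < Rabs p + 1) by (generalize (Rabs_pos p); lra).
  assert (P2 : 0 < Rabs q + 1) by (generalize (Rabs_pos q); lra).
  destruct (H1 (eps / (2 * (Rabs p + 1)))) as [d1 [M1 [Hd1 K1]]].
  { apply Rcomplements.Rdiv_lt_0_compat; lra. }
  destruct (H2 (eps / (2 * (Rabs q + 1)))) as [d2 [M2 [Hd2 K2]]].
  { apply Rcomplements.Rdiv_lt_0_compat; lra. }
  exists (Rmin (Rmin d1 d2) 1), (Rmax (Rmax M1 M2) (a + 1)). split.
  { apply Rmin_glb_lt; [apply Rmin_glb_lt|]; lra. }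
  intros u v Hu Hv.
  assert (m1 := Rmin_l (Rmin d1 d2) 1). assert (m2 := Rmin_r (Rmin d1 d2) 1).
  assert (m3 := Rmin_l d1 d2). assert (m4 := Rmin_r d1 d2).
  assert (n1 := Rmax_l (Rmax M1 M2) (a+1)). assert (n2 := Rmax_r (Rmax M1 M2) (a+1)).
  assert (n3 := Rmax_l M1 M2). assert (n4 := Rmax_r M1 M2).
  rewrite RInt_lin by (first [apply E1|apply E2]; lra).
  replace (p * RInt f u v + q * RInt g u v - (p * L1 + q * L2)) with
    (p * (RInt f u v - L1) + q * (RInt g u v - L2)) by ring.
  apply abs_lin_bound; auto.
  + apply K1; lra.
  + apply K2; lra.
Qed.
Lemma RInt_chasles (f : R -> R) u v w : ex_RInt f u v -> ex_RInt f v w ->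
  RInt f u v + RInt f v w = RInt f u w.
Proof. intros H1 H2. exact (@RInt_Chasles R_CompleteNormedModule f u v w H1 H2). Qed.

Lemma RInt_mono_int (f : R -> R) u' u v v' : u' <= u -> u <= v -> v <= v' -> ex_RInt f u' v' ->
  (forall t, u' < t < v' -> 0 <= f t) -> RInt f u v <= RInt f u' v'.
Proof.
intros H1 H2 H3 E Hp.
assert (E1 : ex_RInt f u' v) by (apply (@ex_RInt_Chasles_1 R_CompleteNormedModule f u' v v'); auto; lra).
assert (E2 : ex_RInt f v v') by (apply (@ex_RInt_Chasles_2 R_CompleteNormedModule f u' v v'); auto; lra).
assert (E3 : ex_RInt f u' u) by (apply (@ex_RInt_Chasles_1 R_CompleteNormedModule f u' u v); auto; lra).
assert (E4 : ex_RInt f u v) by (apply (@ex_RInt_Chasles_2 R_CompleteNormedModule f u' u v); auto; lra).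
rewrite <- (RInt_chasles f u' v v'), <- (RInt_chasles f u' u v); auto.
assert (0 <= RInt f u' u) by (apply RInt_ge_0; auto; intros; apply Hp; lra).
assert (0 <= RInt f v v') by (apply RInt_ge_0; auto; intros; apply Hp; lra).
lra.
Qed.

Lemma IMP_le f g a b L1 L2 : a < b -> IMP f a b L1 -> IMP g a b L2 ->
  (forall t, a < t < b -> f t <= g t) -> L1 <= L2.
Proof.
intros Hab [E1 H1] [E2 H2] Hle.
destruct (Rle_or_lt L1 L2) as [ok|N]; auto. exfalso.
destruct (H1 ((L1 - L2)/2)) as [d1 [Hd1 K1]]; [lra|].
destruct (H2 ((L1 - L2)/2)) as [d2 [Hd2 K2]]; [lra|].
assert (Hd : 0 < Rmin d1 d2) by (apply Rmin_glb_lt; lra).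
destruct (pts a b (Rmin d1 d2) b a) as [u [v [Hu [Hv [Huv _]]]]]; auto; try lra.
assert (m1 := Rmin_l d1 d2). assert (m2 := Rmin_r d1 d2).
specialize (K1 u v ltac:(lra) ltac:(lra)). specialize (K2 u v ltac:(lra) ltac:(lra)).
assert (RInt f u v <= RInt g u v).
{ apply RInt_le; auto. apply E1; lra. apply E2; lra. intros; apply Hle; lra. }
apply Rabs_def2 in K1. apply Rabs_def2 in K2. lra.
Qed.

Lemma RInt_le_IMP f a b L u v : a < b -> IMP f a b L -> (forall t, a < t < b -> 0 <= f t) ->
  a < u -> u <= v -> v < b -> RInt f u v <= L.
Proof.
intros Hab [E H] Hp Hu Huv Hv.
destruct (Rle_or_lt (RInt f u v) L) as [ok|N]; auto. exfalso.
destruct (H (RInt f u v - L)) as [d [Hd K]]; [lra|].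
destruct (pts a b d u v) as [u' [v' [Hu' [Hv' [Huv' [H1 H2]]]]]]; auto.
specialize (K u' v' ltac:(lra) ltac:(lra)).
assert (RInt f u v <= RInt f u' v').
{ apply RInt_mono_int; try lra. apply E; lra. intros; apply Hp; lra. }
apply Rabs_def2 in K. lra.
Qed.

Lemma RInt_le_IMPI f a L u v : IMPI f a L -> (forall t, a < t -> 0 <= f t) ->
  a < u -> u <= v -> RInt f u v <= L.
Proof.
intros [E H] Hp Hu Huv.
destruct (Rle_or_lt (RInt f u v) L) as [ok|N]; auto. exfalso.
destruct (H (RInt f u v - L)) as [d [M [Hd K]]]; [lra|].
destruct (pts_i a d M u v) as [u' [v' [Hu' [Hv' [Huv' [H1 H2]]]]]]; auto.
specialize (K u' v' ltac:(lra) ltac:(lra)).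
assert (RInt f u v <= RInt f u' v').
{ apply RInt_mono_int; try lra. apply E; lra. intros; apply Hp; lra. }
apply Rabs_def2 in K. lra.
Qed.

Lemma IMP_pos f a b L : a < b -> IMP f a b L -> cont_on f a b -> (forall t, a < t < b -> 0 < f t) -> 0 < L.
Proof.
intros Hab HI Hc Hp.
apply Rlt_le_trans with (RInt f (a + (b-a)/4) (b - (b-a)/4)).
- apply RInt_gt_0; try lra.
  + intros; apply Hp; lra.
  + intros; apply Hc; lra.
- apply (RInt_le_IMP f a b); auto; try lra. intros; apply Rlt_le, Hp; auto.
Qed.

Lemma IMPI_pos f a L : IMPI f a L -> (forall t, a < t -> continuous f t) -> (forall t, a < t -> 0 < f t) -> 0 < L.
Proof.
intros HI Hc Hp.
apply Rlt_le_trans with (RInt f (a + 1) (a + 2)).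
- apply RInt_gt_0; try lra.
  + intros; apply Hp; lra.
  + intros; apply Hc; lra.
- apply (RInt_le_IMPI f a); auto; try lra. intros; apply Rlt_le, Hp; auto.
Qed.

Lemma mono_liml (F : R -> R) a b M : a < b ->
  (forall y z, a < y -> y <= z -> z < b -> F y <= F z) ->
  (forall y, a < y < b -> F y <= M) -> exists L, liml F b L.
Proof.
intros Hab Hm Hb.
set (E := fun r => exists y, a < y < b /\ r = F y).
destruct (completeness E) as [L [HL1 HL2]].
- exists M. intros r [y [Hy ->]]. auto.
- exists (F ((a+b)/2)), ((a+b)/2). split; auto; lra.
- exists L. intros eps He.
  assert (exists y0, a < y0 < b /\ L - eps < F y0) as [y0 [Hy0 Hf]].
  { apply NNPP. intro N. assert (L <= L - eps); [|lra].
    apply HL2. intros r [y [Hy ->]]. apply Rnot_lt_le. intro C. apply N. exists y; auto. }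
  exists (b - y0). split; [lra|]. intros y Hy.
  assert (F y0 <= F y) by (apply Hm; lra).
  assert (F y <= L) by (apply HL1; exists y; split; auto; lra).
  apply Rabs_def1; lra.
Qed.

Lemma mono_limr (F : R -> R) a b m : a < b ->
  (forall y z, a < y -> y <= z -> z < b -> F y <= F z) ->
  (forall y, a < y < b -> m <= F y) -> exists L, limr F a L.
Proof.
intros Hab Hm Hb.
destruct (mono_liml (fun y => - F (- y)) (-b) (-a) (-m)) as [L HL]; try lra.
- intros y z Hy Hyz Hz. assert (F (-z) <= F (-y)) by (apply Hm; lra). lra.
- intros y Hy. assert (m <= F (-y)) by (apply Hb; lra). lra.
- exists (-L). intros eps He. destruct (HL eps He) as [d [Hd K]]. exists d; split; auto.
  intros y Hy. specialize (K (-y) ltac:(lra)). rewrite Ropp_involutive in K.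
  replace (F y - - L) with (- (- F y - L)) by ring. rewrite Rabs_Ropp; auto.
Qed.

Lemma mono_limi (F : R -> R) a M :
  (forall y z, a < y -> y <= z -> F y <= F z) ->
  (forall y, a < y -> F y <= M) -> exists L, limi F L.
Proof.
intros Hm Hb.
set (E := fun r => exists y, a < y /\ r = F y).
destruct (completeness E) as [L [HL1 HL2]].
- exists M. intros r [y [Hy ->]]. auto.
- exists (F (a + 1)), (a + 1). split; auto; lra.
- exists L. intros eps He.
  assert (exists y0, a < y0 /\ L - eps < F y0) as [y0 [Hy0 Hf]].
  { apply NNPP. intro N. assert (L <= L - eps); [|lra].
    apply HL2. intros r [y [Hy ->]]. apply Rnot_lt_le. intro C. apply N. exists y; auto. }
  exists y0. intros y Hy.
  assert (F y0 <= F y) by (apply Hm; lra).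
  assert (F y <= L) by (apply HL1; exists y; split; auto; lra).
  apply Rabs_def1; lra.
Qed.

Lemma antider (f : R -> R) a b c : cont_on f a b -> a < c < b ->
  forall y, a < y < b -> is_derive (fun z => RInt f c z) y (f y).
Proof.
intros Hc Hcab y Hy.
apply (@is_derive_RInt R_NormedModule f (fun z => RInt f c z) c y).
- assert (Hd : 0 < Rmin (y - a) (b - y)) by (apply Rmin_glb_lt; lra).
  exists (mkposreal _ Hd). intros z Hz. simpl in Hz.
  unfold ball in Hz; simpl in Hz; unfold AbsRing_ball, abs, minus, plus, opp in Hz; simpl in Hz.
  assert (m1 := Rmin_l (y - a) (b - y)). assert (m2 := Rmin_r (y - a) (b - y)).
  apply Rabs_def2 in Hz.
  apply (@RInt_correct R_CompleteNormedModule). apply (exRI f a b); auto; lra.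
- apply Hc; auto.
Qed.

Lemma antider_i (f : R -> R) a c : (forall y, a < y -> continuous f y) -> a < c ->
  forall y, a < y -> is_derive (fun z => RInt f c z) y (f y).
Proof.
intros Hc Hca y Hy.
apply (@is_derive_RInt R_NormedModule f (fun z => RInt f c z) c y).
- assert (Hd : 0 < y - a) by lra.
  exists (mkposreal _ Hd). intros z Hz. simpl in Hz.
  unfold ball in Hz; simpl in Hz; unfold AbsRing_ball, abs, minus, plus, opp in Hz; simpl in Hz.
  apply Rabs_def2 in Hz.
  apply (@RInt_correct R_CompleteNormedModule). apply (exRIi f a); auto; lra.
- apply Hc; auto.
Qed.

Definition ANTI (f : R -> R) a b L := exists F La Lb,
  (forall y, a < y < b -> is_derive F y (f y)) /\ limr F a La /\ liml F b Lb /\ L = Lb - La.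

Lemma IMP_exists (f : R -> R) a b M : a < b -> cont_on f a b -> (forall t, a < t < b -> 0 <= f t) ->
  (forall u v, a < u -> u <= v -> v < b -> RInt f u v <= M) ->
  exists L, ANTI f a b L /\ IMP f a b L.
Proof.
intros Hab Hc Hp Hb.
set (c := (a + b) / 2).
assert (Hcab : a < c < b) by (unfold c; lra).
set (F := fun z => RInt f c z).
assert (HM : 0 <= M). { apply Rle_trans with (RInt f c c); [|apply Hb; lra].
  rewrite (@RInt_point R_CompleteNormedModule). apply Rle_refl. }
assert (Hmono : forall y z, a < y -> y <= z -> z < b -> F y <= F z).
{ intros y z Hy Hyz Hz. unfold F.
  rewrite <- (RInt_chasles f c y z) by (apply (exRI f a b); auto; lra).
  assert (0 <= RInt f y z) by (apply RInt_ge_0; [lra| apply (exRI f a b); auto; lra | intros; apply Hp; lra]).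
  lra. }
assert (Hup : forall y, a < y < b -> F y <= M).
{ intros y Hy. destruct (Rle_or_lt c y).
  - apply Hb; lra.
  - apply Rle_trans with (F c); [apply Hmono; lra|]. unfold F.
    rewrite (@RInt_point R_CompleteNormedModule). apply HM. }
assert (Hlo : forall y, a < y < b -> - M <= F y).
{ intros y Hy. destruct (Rle_or_lt c y).
  - apply Rle_trans with (F c); [|apply Hmono; lra]. unfold F.
    rewrite (@RInt_point R_CompleteNormedModule). change (@zero R_CompleteNormedModule) with 0. lra.
  - unfold F. rewrite <- (@opp_RInt_swap R_CompleteNormedModule f y c) by (apply (exRI f a b); auto; lra).
    assert (RInt f y c <= M) by (apply Hb; lra). change (opp (RInt f y c)) with (- RInt f y c). lra. }
destruct (mono_liml F a b M Hab Hmono Hup) as [Lb HLb].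
destruct (mono_limr F a b (-M) Hab Hmono Hlo) as [La HLa].
exists (Lb - La). split.
- exists F, La, Lb. split; [|split; [|split]]; auto. intros y Hy. apply (antider f a b); auto.
- apply IMP_ftc with F; auto. intros y Hy. apply (antider f a b); auto.
Qed.

Definition ANTII (f : R -> R) a L := exists F La Lb,
  (forall y, a < y -> is_derive F y (f y)) /\ limr F a La /\ limi F Lb /\ L = Lb - La.

Lemma IMPI_exists (f : R -> R) a M : (forall y, a < y -> continuous f y) -> (forall t, a < t -> 0 <= f t) ->
  (forall u v, a < u -> u <= v -> RInt f u v <= M) ->
  exists L, ANTII f a L /\ IMPI f a L.
Proof.
intros Hc Hp Hb.
set (c := a + 1).
assert (Hca : a < c) by (unfold c; lra).
set (F := fun z => RInt f c z).
assert (HM : 0 <= M). { apply Rle_trans with (RInt f c c); [|apply Hb; lra].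
  rewrite (@RInt_point R_CompleteNormedModule). apply Rle_refl. }
assert (Hmono : forall y z, a < y -> y <= z -> F y <= F z).
{ intros y z Hy Hyz. unfold F.
  rewrite <- (RInt_chasles f c y z) by (apply (exRIi f a); auto; lra).
  assert (0 <= RInt f y z) by (apply RInt_ge_0; [lra| apply (exRIi f a); auto; lra | intros; apply Hp; lra]).
  lra. }
assert (Hup : forall y, a < y -> F y <= M).
{ intros y Hy. destruct (Rle_or_lt c y).
  - apply Hb; lra.
  - apply Rle_trans with (F c); [apply Hmono; lra|]. unfold F.
    rewrite (@RInt_point R_CompleteNormedModule). apply HM. }
assert (Hlo : forall y, a < y < c -> - M <= F y).
{ intros y Hy. unfold F. rewrite <- (@opp_RInt_swap R_CompleteNormedModule f y c) by (apply (exRIi f a); auto; lra).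
  assert (RInt f y c <= M) by (apply Hb; lra). change (opp (RInt f y c)) with (- RInt f y c). lra. }
destruct (mono_limi F a M Hmono Hup) as [Lb HLb].
destruct (mono_limr F a c (-M) Hca (fun y z H1 H2 H3 => Hmono y z H1 H2) Hlo) as [La HLa].
exists (Lb - La). split.
- exists F, La, Lb. split; [|split; [|split]]; auto. intros y Hy. apply (antider_i f a); auto.
- apply IMPI_ftc with F; auto. intros y Hy. apply (antider_i f a); auto.
Qed.
Lemma cont_eps (F : R -> R) a : continuous F a -> forall eps, 0 < eps ->
  exists d, 0 < d /\ forall y, Rabs (y - a) < d -> Rabs (F y - F a) < eps.
Proof.
intros Hc eps He.
destruct (proj1 (filterlim_locally F (F a)) Hc (mkposreal eps He)) as [d Hd].
exists d. split; [apply cond_pos|]. intros y Hy. apply (Hd y). exact Hy.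
Qed.

Lemma cont_limr (F : R -> R) a : continuous F a -> limr F a (F a).
Proof.
intros Hc eps He. destruct (cont_eps F a Hc eps He) as [d [Hd K]].
exists d; split; auto. intros y Hy. apply K. apply Rabs_def1; lra.
Qed.

Lemma cont_liml (F : R -> R) a : continuous F a -> liml F a (F a).
Proof.
intros Hc eps He. destruct (cont_eps F a Hc eps He) as [d [Hd K]].
exists d; split; auto. intros y Hy. apply K. apply Rabs_def1; lra.
Qed.

Lemma limr_squeeze (G H : R -> R) a d0 : 0 < d0 -> (forall y, a < y < a + d0 -> Rabs (G y) <= H y) ->
  limr H a 0 -> limr G a 0.
Proof.
intros Hd0 Hb HH eps He. destruct (HH eps He) as [d [Hd K]].
exists (Rmin d d0). split; [apply Rmin_glb_lt; lra|]. intros y Hy.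
assert (m1 := Rmin_l d d0). assert (m2 := Rmin_r d d0).
rewrite Rminus_0_r. specialize (K y ltac:(lra)). rewrite Rminus_0_r in K.
apply Rle_lt_trans with (H y); [apply Hb; lra|]. apply Rle_lt_trans with (Rabs (H y)); auto. apply RRle_abs.
Qed.

Lemma liml_squeeze (G H : R -> R) a d0 : 0 < d0 -> (forall y, a - d0 < y < a -> Rabs (G y) <= H y) ->
  liml H a 0 -> liml G a 0.
Proof.
intros Hd0 Hb HH eps He. destruct (HH eps He) as [d [Hd K]].
exists (Rmin d d0). split; [apply Rmin_glb_lt; lra|]. intros y Hy.
assert (m1 := Rmin_l d d0). assert (m2 := Rmin_r d d0).
rewrite Rminus_0_r. specialize (K y ltac:(lra)). rewrite Rminus_0_r in K.
apply Rle_lt_trans with (H y); [apply Hb; lra|]. apply Rle_lt_trans with (Rabs (H y)); auto. apply RRle_abs.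
Qed.

Lemma Rpower_pos x y : 0 < Rpower x y.
Proof. unfold Rpower; apply exp_pos. Qed.

Lemma Rpow_lim0 p : 0 < p -> limr (fun t => Rpower t p) 0 0.
Proof.
intros Hp eps He. exists (Rpower eps (/ p)). split; [apply Rpower_pos|].
intros y Hy. rewrite Rminus_0_r, Rabs_pos_eq by (apply Rlt_le, Rpower_pos).
replace eps with (Rpower (Rpower eps (/p)) p).
- apply Rlt_Rpower_l; auto; lra.
- rewrite Rpower_mult. replace (/ p * p) with 1 by (field; lra). apply Rpower_1; auto.
Qed.

Lemma Rpower_exp z p : Rpower (exp z) p = exp (p * z).
Proof. unfold Rpower. rewrite ln_exp. reflexivity. Qed.

Lemma exp_sq_bound y : 0 < y -> y * y < 4 * exp y.
Proof.
intros Hy. replace y with (y/2 + y/2) at 3 by field. rewrite exp_plus.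
assert (H := exp_ineq1 (y/2) ltac:(lra)). nra.
Qed.

Lemma pe_bound p y : 0 < p -> 0 < y -> Rpower y p * exp (- y) <= Rpower (4 * p^2 / y) p.
Proof.
intros Hp Hy.
replace (exp (- y)) with (Rpower (exp (- (y / p))) p) by (rewrite Rpower_exp; f_equal; field; lra).
rewrite Rpower_mult_distr by (auto; apply exp_pos).
apply Rle_Rpower_l; [lra|]. split.
- apply Rmult_lt_0_compat; auto; apply exp_pos.
- assert (H := exp_sq_bound (y / p) ltac:(apply Rdiv_lt_0_compat; lra)).
  rewrite exp_Ropp. apply Rmult_le_reg_r with (exp (y/p)); [apply exp_pos|].
  apply Rmult_le_reg_r with y; auto.
  replace (y * / exp (y / p) * exp (y / p) * y) with (y * y) by (field; apply Rgt_not_eq, exp_pos).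
  replace (4 * p ^ 2 / y * exp (y / p) * y) with (p * p * (4 * exp (y / p))) by (field; lra).
  replace (y * y) with (p * p * (y / p * (y / p))) by (field; lra).
  apply Rmult_le_compat_l; [nra|lra].
Qed.

Lemma Rpower_le1 x p : 0 < x <= 1 -> 0 <= p -> Rpower x p <= 1.
Proof.
intros Hx Hp. replace 1 with (Rpower 1 p) by (unfold Rpower; rewrite ln_1, Rmult_0_r, exp_0; auto).
apply Rle_Rpower_l; auto; lra.
Qed.

Lemma Rpower_m1 t s : 0 < t -> Rpower t (s - 1) = Rpower t s / t.
Proof.
intros Ht. unfold Rpower. replace ((s - 1) * ln t) with (s * ln t + - ln t) by ring.
rewrite exp_plus, exp_Ropp, exp_ln; auto.
Qed.

Lemma Rpower_p1 t s : 0 < t -> Rpower t (s + 1) = Rpower t s * t.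
Proof.
intros Ht. unfold Rpower. replace ((s + 1) * ln t) with (s * ln t + ln t) by ring.
rewrite exp_plus, exp_ln; auto.
Qed.

Lemma Rpower_dec x p q : 0 < x <= 1 -> p <= q -> Rpower x q <= Rpower x p.
Proof.
intros Hx Hpq. replace q with (p + (q - p)) by ring. rewrite Rpower_plus.
assert (Rpower x (q - p) <= 1) by (apply Rpower_le1; lra).
assert (0 < Rpower x p) by apply Rpower_pos.
assert (0 < Rpower x (q - p)) by apply Rpower_pos. nra.
Qed.

Lemma cont_limr' (F : R -> R) a L : continuous F a -> F a = L -> limr F a L.
Proof. intros H <-. apply cont_limr; auto. Qed.
Lemma cont_liml' (F : R -> R) a L : continuous F a -> F a = L -> liml F a L.
Proof. intros H <-. apply cont_liml; auto. Qed.
Lemma IMP_to f a b L : IMP f a b L -> improper_int_ab f a b L.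
Proof.
intros [E H]. split.
- intros u v Hu Huv Hv. constructor. apply ex_RInt_Reals_0. apply E; auto.
- intros eps He. destruct (H eps He) as [d [Hd K]]. exists d. split; [lra|].
  intros u v pr Hu1 Hu2 Hv1 Hv2. rewrite <- (RInt_Reals f u v pr). apply K; lra.
Qed.

Lemma IMPI_to f a L : IMPI f a L -> improper_int_a_inf f a L.
Proof.
intros [E H]. split.
- intros u v Hu Huv. constructor. apply ex_RInt_Reals_0. apply E; auto.
- intros eps He. destruct (H eps He) as [d [M [Hd K]]]. exists d, M. split; [lra|].
  intros u v pr Hu1 Hu2 Hv. rewrite <- (RInt_Reals f u v pr). apply K; lra.
Qed.

Lemma IMPI_of f a L : improper_int_a_inf f a L -> IMPI f a L.
Proof.
intros [E H]. split.
- intros u v Hu Huv. destruct (E u v Hu Huv) as [pr]. apply ex_RInt_Reals_1; auto.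
- intros eps He. destruct (H eps He) as [d [M [Hd K]]]. exists (Rmin d 1), (Rmax M (a + 1)). split.
  { apply Rmin_glb_lt; lra. }
  assert (m1 := Rmin_l d 1). assert (m2 := Rmin_r d 1).
  intros u v Hu Hv. assert (n1 := Rmax_l M (a+1)). assert (n2 := Rmax_r M (a+1)).
  destruct (E u v ltac:(lra) ltac:(lra)) as [pr].
  rewrite (RInt_Reals f u v pr). apply K; lra.
Qed.

Lemma RInt_CS (g h : R -> R) u v : u <= v ->
  (forall t, u <= t <= v -> continuous g t) -> (forall t, u <= t <= v -> continuous h t) ->
  (RInt (fun t => g t * h t) u v) ^ 2 <= RInt (fun t => g t * g t) u v * RInt (fun t => h t * h t) u v.
Proof.
intros Huv Hg Hh.
assert (Cgg : forall t, Rmin u v <= t <= Rmax u v -> continuous (fun t => g t * g t) t).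
{ intros t Ht. rewrite Rmin_left, Rmax_right in Ht by lra. apply (@continuous_mult R_UniformSpace R_AbsRing); apply Hg || apply Hh; auto. }
assert (Chh : forall t, Rmin u v <= t <= Rmax u v -> continuous (fun t => h t * h t) t).
{ intros t Ht. rewrite Rmin_left, Rmax_right in Ht by lra. apply (@continuous_mult R_UniformSpace R_AbsRing); apply Hh; auto. }
assert (Cgh : forall t, Rmin u v <= t <= Rmax u v -> continuous (fun t => g t * h t) t).
{ intros t Ht. rewrite Rmin_left, Rmax_right in Ht by lra. apply (@continuous_mult R_UniformSpace R_AbsRing); [apply Hg|apply Hh]; auto. }
assert (Egg := @ex_RInt_continuous R_CompleteNormedModule _ u v Cgg).
assert (Ehh := @ex_RInt_continuous R_CompleteNormedModule _ u v Chh).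
assert (Egh := @ex_RInt_continuous R_CompleteNormedModule _ u v Cgh).
set (A := RInt (fun t => g t * g t) u v) in *.
set (B := RInt (fun t => h t * h t) u v) in *.
set (C := RInt (fun t => g t * h t) u v) in *.
assert (Q : forall l, 0 <= A - 2 * l * C + l * l * B).
{ intros l.
  assert (E1 : ex_RInt (fun t => 1 * (g t * g t) + (- 2 * l) * (g t * h t)) u v) by (apply ex_RInt_lin; auto).
  assert (E2 := ex_RInt_lin _ _ u v 1 (l * l) E1 Ehh).
  assert (0 <= RInt (fun t => 1 * (1 * (g t * g t) + (- 2 * l) * (g t * h t)) + (l*l) * (h t * h t)) u v).
  { apply RInt_ge_0; auto. intros t _.
    replace (1 * (1 * (g t * g t) + - 2 * l * (g t * h t)) + l * l * (h t * h t)) with ((g t - l * h t) ^ 2) by ring.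
    apply pow2_ge_0. }
  rewrite RInt_lin in H; auto. rewrite RInt_lin in H; auto. fold A B C in H. lra. }
assert (HB : 0 <= B) by (apply RInt_ge_0; auto; intros; nra).
destruct (Rle_lt_or_eq_dec 0 B HB) as [Bp|B0].
- specialize (Q (C / B)).
  assert (A - 2 * (C / B) * C + C / B * (C / B) * B = A - C * C / B) by (field; lra).
  rewrite H in Q.
  assert (0 <= (A - C * C / B) * B) by (apply Rmult_le_pos; lra).
  replace ((A - C * C / B) * B) with (A * B - C * C) in H0 by (field; lra). nra.
- rewrite <- B0. destruct (Req_dec C 0) as [C0|C0].
  + rewrite C0. assert (0 <= A) by (specialize (Q 0); lra). nra.
  + exfalso. specialize (Q ((A + 1) / (2 * C))). rewrite <- B0 in Q.
    replace (A - 2 * ((A + 1) / (2 * C)) * C + (A + 1) / (2 * C) * ((A + 1) / (2 * C)) * 0) with (-1) in Q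
      by (field; auto). lra.
Qed.

Definition gi s t := Rpower t (s - 1) * exp (- t).

Lemma gi_cont s t : 0 < t -> continuous (gi s) t.
Proof. intros Ht. apply (@ex_derive_continuous R_AbsRing R_NormedModule). unfold gi, Rpower. auto_derive. lra. Qed.

Lemma gi_pos s t : 0 < gi s t.
Proof. unfold gi. apply Rmult_lt_0_compat; [apply Rpower_pos|apply exp_pos]. Qed.

Lemma Gamma_exists s : 0 < s -> exists L, IMPI (gi s) 0 L.
Proof.
intros Hs.
set (K := exp 1 * Rpower (4 * (s + 1) ^ 2) (s + 1)).
set (mg := fun t => K * (Rpower t (s - 1) * Rpower (1 + t) (- (s + 1)))).
set (Mg := fun t => K * (Rpower t s * Rpower (1 + t) (- s) / s)).
assert (Hd : forall t, 0 < t -> is_derive Mg t (mg t)).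
{ intros t Ht. unfold Mg, mg, Rpower. auto_derive; [lra|].
  replace ((s - 1) * ln t) with (s * ln t + - ln t) by ring.
  replace (- (s + 1) * ln (1 + t)) with (- s * ln (1 + t) + - ln (1 + t)) by ring.
  rewrite !exp_plus, !exp_Ropp, !exp_ln by lra. field. lra. }
assert (Hc : forall t, 0 < t -> continuous mg t).
{ intros t Ht. apply (@ex_derive_continuous R_AbsRing R_NormedModule). unfold mg, Rpower. auto_derive. lra. }
assert (HMg : forall t, 0 < t -> 0 <= Mg t <= K / s).
{ intros t Ht.
  assert (E : Rpower t s * Rpower (1 + t) (- s) = Rpower (t / (1 + t)) s).
  { unfold Rpower. rewrite <- exp_plus. rewrite ln_div by lra. f_equal. ring. }
  assert (Rpower (t / (1 + t)) s <= 1).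
  { apply Rpower_le1; [|lra]. split. apply Rdiv_lt_0_compat; lra.
    apply Rmult_le_reg_r with (1 + t); [lra|]. field_simplify; lra. }
  assert (0 < Rpower (t / (1 + t)) s) by apply Rpower_pos.
  assert (0 < K) by (unfold K; apply Rmult_lt_0_compat; [apply exp_pos|apply Rpower_pos]).
  replace (Mg t) with (K * Rpower (t / (1 + t)) s * / s) by (unfold Mg; rewrite <- E; field; lra).
  assert (0 < / s) by (apply Rinv_0_lt_compat; lra).
  split.
  - apply Rmult_le_pos; [|lra]. apply Rmult_le_pos; lra.
  - unfold Rdiv. apply Rmult_le_compat_r; [lra|]. rewrite <- (Rmult_1_r K) at 2.
    apply Rmult_le_compat_l; lra. }
assert (Hle : forall t, 0 < t -> gi s t <= mg t).
{ intros t Ht. unfold gi, mg.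
  assert (B : Rpower (1 + t) (s + 1) * exp (- t) <= K).
  { replace (exp (- t)) with (exp 1 * exp (- (1 + t))) by (rewrite <- exp_plus; f_equal; ring).
    unfold K. replace (Rpower (1 + t) (s + 1) * (exp 1 * exp (- (1 + t)))) with
      (exp 1 * (Rpower (1 + t) (s + 1) * exp (- (1 + t)))) by ring.
    apply Rmult_le_compat_l; [apply Rlt_le, exp_pos|].
    eapply Rle_trans; [apply pe_bound; lra|].
    apply Rle_Rpower_l; [lra|]. split.
    - apply Rdiv_lt_0_compat; [nra|lra].
    - apply Rmult_le_reg_r with (1 + t); [lra|]. field_simplify; try lra. nra. }
  rewrite Rpower_Ropp.
  assert (0 < Rpower (1 + t) (s + 1)) by apply Rpower_pos.
  assert (0 < Rpower t (s - 1)) by apply Rpower_pos.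
  apply Rmult_le_reg_r with (Rpower (1 + t) (s + 1)); auto.
  replace (K * (Rpower t (s - 1) * / Rpower (1 + t) (s + 1)) * Rpower (1 + t) (s + 1))
    with (Rpower t (s - 1) * K) by (field; lra).
  replace (Rpower t (s - 1) * exp (- t) * Rpower (1 + t) (s + 1)) with
    (Rpower t (s - 1) * (Rpower (1 + t) (s + 1) * exp (- t))) by ring.
  apply Rmult_le_compat_l; lra. }
destruct (IMPI_exists (gi s) 0 (K / s)) as [L [_ HL]].
- intros; apply gi_cont; auto.
- intros; apply Rlt_le, gi_pos.
- intros u v Hu Huv. apply Rle_trans with (RInt mg u v).
  + apply RInt_le; auto. apply (exRIi _ 0); auto; try lra. intros; apply gi_cont; auto.
    apply (exRIi _ 0); auto; try lra. intros t Ht; apply Hle; lra.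
  + rewrite (RInt_ftc mg Mg).
    * assert (H1 := HMg u Hu). assert (H2 := HMg v ltac:(lra)). lra.
    * intros y Hy. apply Hd. rewrite Rmin_left in Hy; lra.
    * intros y Hy. apply Hc. rewrite Rmin_left in Hy; lra.
- exists L; auto.
Qed.

Lemma Gamma_spec s : 0 < s -> IMPI (gi s) 0 (Gamma s).
Proof.
intros Hs. apply IMPI_of. unfold Gamma. apply epsilon_spec.
destruct (Gamma_exists s Hs) as [L HL]. exists L. apply IMPI_to in HL. exact HL.
Qed.

Lemma Gamma_pos s : 0 < s -> 0 < Gamma s.
Proof.
intros Hs. apply (IMPI_pos (gi s) 0). apply Gamma_spec; auto.
intros; apply gi_cont; auto. intros; apply gi_pos.
Qed.

Lemma Gamma_rec s : 0 < s -> Gamma (s + 1) = s * Gamma s.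
Proof.
intros Hs.
set (Q := fun t => - (Rpower t s * exp (- t))).
assert (H1 : IMPI (fun t => 1 * gi (s + 1) t + (- s) * gi s t) 0 (0 - 0)).
{ apply IMPI_ftc with Q.
  - intros y Hy. unfold Q, gi. replace (s + 1 - 1) with s by ring. rewrite Rpower_m1 by auto.
    unfold Rpower. auto_derive; [lra|]. field. lra.
  - intros y Hy. apply (@ex_derive_continuous R_AbsRing R_NormedModule). unfold gi, Rpower. auto_derive. lra.
  - apply limr_squeeze with (fun t => Rpower t s) 1; [lra| |apply Rpow_lim0; auto].
    intros y Hy. unfold Q. rewrite Rabs_Ropp, Rabs_pos_eq.
    + assert (exp (- y) <= 1) by (rewrite <- exp_0; apply Rlt_le, exp_increasing; lra).
      assert (0 < Rpower y s) by apply Rpower_pos. nra.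
    + apply Rlt_le, Rmult_lt_0_compat; [apply Rpower_pos|apply exp_pos].
  - intros eps He. set (dl := Rpower eps (/ s)).
    assert (Hdl : 0 < dl) by apply Rpower_pos.
    exists (Rmax 1 (4 * s ^ 2 / dl)). intros y Hy.
    assert (m1 := Rmax_l 1 (4 * s ^ 2 / dl)). assert (m2 := Rmax_r 1 (4 * s ^ 2 / dl)).
    unfold Q. rewrite Rminus_0_r, Rabs_Ropp, Rabs_pos_eq
      by (apply Rlt_le, Rmult_lt_0_compat; [apply Rpower_pos|apply exp_pos]).
    eapply Rle_lt_trans; [apply pe_bound; lra|].
    replace eps with (Rpower dl s).
    + apply Rlt_Rpower_l; auto. split. apply Rdiv_lt_0_compat; [nra|lra].
      apply Rmult_lt_reg_r with y; [lra|]. unfold Rdiv. rewrite Rmult_assoc, Rinv_l, Rmult_1_r by lra.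
      apply Rmult_lt_reg_r with (/ dl); [apply Rinv_0_lt_compat; auto|].
      replace (dl * y * / dl) with y by (field; lra). lra.
    + unfold dl. rewrite Rpower_mult. replace (/ s * s) with 1 by (field; lra). apply Rpower_1; auto. }
assert (H2 := IMPI_lin _ _ 0 _ _ 1 (- s) (Gamma_spec (s + 1) ltac:(lra)) (Gamma_spec s Hs)).
assert (E := IMPI_unique _ _ _ _ H1 H2). lra.
Qed.

Lemma Gamma_logconv s : 0 < s -> Gamma (s + /2) ^ 2 <= Gamma s * Gamma (s + 1).
Proof.
intros Hs.
assert (S1 := Gamma_spec (s + /2) ltac:(lra)).
assert (S2 := Gamma_spec s Hs). assert (S3 := Gamma_spec (s + 1) ltac:(lra)).
assert (P1 := Gamma_pos (s + /2) ltac:(lra)).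
assert (P2 := Gamma_pos s Hs). assert (P3 := Gamma_pos (s + 1) ltac:(lra)).
set (g := fun t => Rpower t ((s - 1) / 2) * exp (- t / 2)).
set (h := fun t => Rpower t (s / 2) * exp (- t / 2)).
assert (CS : forall u v, 0 < u -> u <= v -> RInt (gi (s + /2)) u v ^ 2 <= RInt (gi s) u v * RInt (gi (s + 1)) u v).
{ intros u v Hu Huv.
  assert (X := RInt_CS g h u v Huv).
  rewrite (@RInt_ext R_CompleteNormedModule (fun t => g t * h t) (gi (s + /2))) in X.
  rewrite (@RInt_ext R_CompleteNormedModule (fun t => g t * g t) (gi s)) in X.
  rewrite (@RInt_ext R_CompleteNormedModule (fun t => h t * h t) (gi (s + 1))) in X.
  - apply X; intros t Ht; apply (@ex_derive_continuous R_AbsRing R_NormedModule); unfold g, h, Rpower; auto_derive; lra.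
  - intros; unfold h, gi, Rpower. rewrite <- !exp_plus. f_equal. field.
  - intros; unfold g, gi, Rpower. rewrite <- !exp_plus. f_equal. field.
  - intros; unfold g, h, gi, Rpower. rewrite <- !exp_plus. f_equal. field. }
apply Rle_plus_epsilon. intros eps He.
set (e := Rmin 1 (eps / (2 * Gamma (s + /2) + 1))).
assert (He1 : 0 < e) by (apply Rmin_glb_lt; [lra|apply Rdiv_lt_0_compat; lra]).
assert (He2 : e <= 1) by apply Rmin_l.
assert (He3 : e <= eps / (2 * Gamma (s + /2) + 1)) by apply Rmin_r.
assert (He4 : e * (2 * Gamma (s + /2) + 1) <= eps).
{ apply Rmult_le_reg_r with (/ (2 * Gamma (s + / 2) + 1)). apply Rinv_0_lt_compat; lra.
  replace (e * (2 * Gamma (s + / 2) + 1) * / (2 * Gamma (s + / 2) + 1)) with e by (field; lra). exact He3. }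
destruct S1 as [E1 K1]. destruct (K1 e He1) as [d [M [Hd K]]].
destruct (pts_i 0 d M 1 0) as [u [v [Hu [Hv [Huv _]]]]]; auto; try lra.
specialize (K u v Hu Hv). apply Rabs_def2 in K.
set (R1 := RInt (gi (s + /2)) u v) in *.
assert (R1le : R1 <= Gamma (s + /2)) by (apply (RInt_le_IMPI _ 0); auto; [split; auto| intros; apply Rlt_le, gi_pos|lra]).
assert (R1p : 0 <= R1) by (apply RInt_ge_0; auto; [apply E1; lra| intros; apply Rlt_le, gi_pos]).
assert (R2 : RInt (gi s) u v <= Gamma s) by (apply (RInt_le_IMPI _ 0); auto; [intros; apply Rlt_le, gi_pos|lra]).
assert (R3 : RInt (gi (s + 1)) u v <= Gamma (s + 1)) by (apply (RInt_le_IMPI _ 0); auto; [intros; apply Rlt_le, gi_pos|lra]).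
assert (R2p : 0 <= RInt (gi s) u v) by (apply RInt_ge_0; auto; [apply (proj1 S2); lra| intros; apply Rlt_le, gi_pos]).
assert (R3p : 0 <= RInt (gi (s+1)) u v) by (apply RInt_ge_0; auto; [apply (proj1 S3); lra| intros; apply Rlt_le, gi_pos]).
specialize (CS u v ltac:(lra) Huv). fold R1 in CS.
assert (RInt (gi s) u v * RInt (gi (s + 1)) u v <= Gamma s * Gamma (s + 1)).
{ apply Rmult_le_compat; auto. }
assert (Gamma (s + /2) < R1 + e) by lra.
assert (Gamma (s + /2) ^ 2 <= (R1 + e) ^ 2) by (apply pow_incr; lra).
nra.
Qed.
Lemma asin_liml1 : liml asin 1 (PI / 2).
Proof.
intros eps He. set (e := Rmin eps 1).
assert (He1 : 0 < e) by (apply Rmin_glb_lt; lra).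
assert (He2 : e <= 1) by apply Rmin_r. assert (He3 : e <= eps) by apply Rmin_l.
assert (P := PI2_1).
assert (Hc : cos e < 1) by (rewrite <- cos_0; apply cos_decreasing_1; lra).
exists (1 - cos e). split; [lra|]. intros y Hy.
assert (B := asin_bound y). assert (Cb := COS_bound e).
assert (PI / 2 - e < asin y).
{ apply Rnot_le_lt. intro C.
  assert (sin (asin y) <= sin (PI / 2 - e)).
  { destruct (Req_dec (asin y) (PI / 2 - e)) as [Q|Q].
    - rewrite Q; apply Rle_refl.
    - apply Rlt_le, sin_increasing_1; lra. }
  rewrite sin_asin in H by lra. rewrite sin_shift in H. lra. }
apply Rabs_def1; lra.
Qed.

Lemma is_derive_asin y : -1 < y < 1 -> is_derive asin y (1 / sqrt (1 - y²)).
Proof.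
intros Hy. apply is_derive_Reals.
apply derive_pt_eq_1 with (derivable_pt_asin y Hy). apply derive_pt_asin.
Qed.

Lemma Rpow_lim1 p : 0 < p -> liml (fun s => Rpower (1 - s) p) 1 0.
Proof.
intros Hp eps He. destruct (Rpow_lim0 p Hp eps He) as [d [Hd K]].
exists d. split; auto. intros y Hy. apply K. lra.
Qed.

Definition bi a s := Rpower s (a - 1) * Rpower (1 - s) (- (1 / 2)).

Lemma bi_cont a : cont_on (bi a) 0 1.
Proof. intros s Hs. apply (@ex_derive_continuous R_AbsRing R_NormedModule). unfold bi, Rpower. auto_derive. lra. Qed.

Lemma bi_pos a s : 0 < bi a s.
Proof. unfold bi. apply Rmult_lt_0_compat; apply Rpower_pos. Qed.

Lemma bi_half s : 0 < s < 1 -> is_derive (fun s => asin (2 * s - 1)) s (bi (1/2) s).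
Proof.
intros Hs.
assert (E : bi (1/2) s = 2 * (1 / sqrt (1 - (2 * s - 1)²))).
{ unfold bi. replace (1/2 - 1) with (- / 2) by field. rewrite !Rpower_Ropp.
  replace (1/2) with (/2) by field. rewrite !Rpower_sqrt by lra.
  replace (1 - (2 * s - 1)²) with (4 * (s * (1 - s))) by (unfold Rsqr; ring).
  rewrite sqrt_mult by nra. rewrite sqrt_mult by lra.
  replace 4 with (2 * 2) by ring. rewrite sqrt_square by lra.
  assert (0 < sqrt s) by (apply sqrt_lt_R0; lra).
  assert (0 < sqrt (1 - s)) by (apply sqrt_lt_R0; lra).
  field. lra. }
rewrite E.
apply (is_derive_comp asin (fun s => 2 * s - 1) s).
- apply is_derive_asin. lra.
- auto_derive; auto. ring.
Qed.

Lemma bi_half_IMP : IMP (bi (1/2)) 0 1 PI.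
Proof.
replace PI with (PI / 2 - - (PI / 2)) by field.
apply IMP_ftc with (fun s => asin (2 * s - 1)); try lra.
- intros y Hy; apply bi_half; auto.
- apply bi_cont.
- intros eps He. destruct (asin_liml1 eps He) as [d [Hd K]]. exists (d/2). split; [lra|].
  intros y Hy. replace (2 * y - 1) with (- (1 - 2 * y)) by ring. rewrite asin_opp.
  replace (- asin (1 - 2 * y) - - (PI / 2)) with (- (asin (1 - 2 * y) - PI / 2)) by ring.
  rewrite Rabs_Ropp. apply K. lra.
- intros eps He. destruct (asin_liml1 eps He) as [d [Hd K]]. exists (d/2). split; [lra|].
  intros y Hy. apply K. lra.
Qed.

Lemma bi_le_half a s : 1/2 <= a -> 0 < s < 1 -> bi a s <= bi (1/2) s.
Proof.
intros Ha Hs. unfold bi. apply Rmult_le_compat_r; [apply Rlt_le, Rpower_pos|].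
apply Rpower_dec; lra.
Qed.

Lemma Beta_exists a : 1/2 <= a -> exists L, ANTI (bi a) 0 1 L /\ IMP (bi a) 0 1 L.
Proof.
intros Ha. apply IMP_exists with PI; try lra.
- apply bi_cont.
- intros; apply Rlt_le, bi_pos.
- intros u v Hu Huv Hv. apply Rle_trans with (RInt (bi (1/2)) u v).
  + apply RInt_le; auto; try (apply (exRI _ 0 1); [apply bi_cont|lra|lra]).
    intros; apply bi_le_half; lra.
  + rewrite (RInt_ftc _ (fun s => asin (2 * s - 1))).
    * assert (A1 := asin_bound (2 * v - 1)). assert (A2 := asin_bound (2 * u - 1)). lra.
    * intros y Hy. rewrite Rmin_left, Rmax_right in Hy by lra. apply bi_half; lra.
    * intros y Hy. rewrite Rmin_left, Rmax_right in Hy by lra. apply bi_cont; lra.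
Qed.

Definition Bt a := epsilon (inhabits 0) (fun L => IMP (bi a) 0 1 L).

Lemma Bt_spec a : 1/2 <= a -> IMP (bi a) 0 1 (Bt a).
Proof.
intros Ha. unfold Bt. apply epsilon_spec. destruct (Beta_exists a Ha) as [L [_ H]]. exists L; auto.
Qed.

Lemma Bt_anti a : 1/2 <= a -> ANTI (bi a) 0 1 (Bt a).
Proof.
intros Ha. destruct (Beta_exists a Ha) as [L [H1 H2]].
rewrite (IMP_unique (bi a) 0 1 (Bt a) L); auto; try lra. apply Bt_spec; auto.
Qed.

Lemma Bt_half : Bt (1/2) = PI.
Proof. apply (IMP_unique (bi (1/2)) 0 1); [lra|apply Bt_spec; lra|apply bi_half_IMP]. Qed.

Lemma Bt_one : Bt 1 = 2.
Proof.
apply (IMP_unique (bi 1) 0 1); [lra|apply Bt_spec; lra|].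
replace 2 with (0 - -2) by ring.
apply IMP_ftc with (fun s => -2 * Rpower (1 - s) (1/2)); try lra.
- intros y Hy. unfold bi, Rpower. auto_derive; [lra|].
  replace ((1 - 1) * ln y) with 0 by ring. rewrite exp_0.
  replace (1 - y) with (1 + - y) by ring.
  assert (E : forall L : R, - (1/2) * L = 1/2 * L + - L) by (intros; field). rewrite E.
  rewrite exp_plus, exp_Ropp, exp_ln by lra. field. lra.
- apply bi_cont.
- apply cont_limr'.
  + apply (@ex_derive_continuous R_AbsRing R_NormedModule). unfold Rpower. auto_derive. lra.
  + replace (1 - 0) with 1 by ring.
    unfold Rpower. rewrite ln_1. rewrite Rmult_0_r, exp_0. ring.
- apply liml_squeeze with (fun s => 2 * Rpower (1 - s) (1/2)) 1; [lra| |].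
  + intros y Hy. rewrite Rabs_mult, Rabs_pos_eq with (x := Rpower _ _) by (apply Rlt_le, Rpower_pos).
    rewrite Rabs_left by lra. lra.
  + intros eps He. destruct (Rpow_lim1 (1/2) ltac:(lra) (eps/2) ltac:(lra)) as [d [Hd K]].
    exists d. split; auto. intros y Hy. specialize (K y Hy). rewrite Rminus_0_r in *.
    rewrite Rabs_mult, Rabs_pos_eq by lra. lra.
Qed.

Lemma Bt_rec a : 1/2 <= a -> (a + 1/2) * Bt (a + 1) = a * Bt a.
Proof.
intros Ha.
set (P := fun s => Rpower s a * Rpower (1 - s) (1/2)).
assert (H1 : IMP (fun s => a * bi a s + (- (a + 1/2)) * bi (a + 1) s) 0 1 (0 - 0)).
{ apply IMP_ftc with P; try lra.
  - intros y Hy. unfold P, bi. replace (a + 1 - 1) with a by ring.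
    rewrite Rpower_m1 by lra.
    replace (- (1/2)) with (1/2 - 1) by field. rewrite (Rpower_m1 (1 - y)) by lra.
    unfold Rpower. auto_derive; [lra|]. unfold Rminus. field. lra.
  - intros y Hy. apply (@ex_derive_continuous R_AbsRing R_NormedModule). unfold bi, Rpower. auto_derive. lra.
  - apply limr_squeeze with (fun s => Rpower s a) 1; [lra| |apply Rpow_lim0; lra].
    intros y Hy. unfold P. rewrite Rabs_pos_eq by (apply Rlt_le, Rmult_lt_0_compat; apply Rpower_pos).
    assert (Rpower (1 - y) (1/2) <= 1) by (apply Rpower_le1; lra).
    assert (0 < Rpower y a) by apply Rpower_pos. nra.
  - apply liml_squeeze with (fun s => Rpower (1 - s) (1/2)) 1; [lra| |apply Rpow_lim1; lra].
    intros y Hy. unfold P. rewrite Rabs_pos_eq by (apply Rlt_le, Rmult_lt_0_compat; apply Rpower_pos).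
    assert (Rpower y a <= 1) by (apply Rpower_le1; lra).
    assert (0 < Rpower (1 - y) (1/2)) by apply Rpower_pos. nra. }
assert (H2 := IMP_lin _ _ 0 1 _ _ a (- (a + 1/2)) ltac:(lra) (Bt_spec a Ha) (Bt_spec (a + 1) ltac:(lra))).
assert (E := IMP_unique _ 0 1 _ _ ltac:(lra) H1 H2). nra.
Qed.

Lemma Bt_mono a a' : 1/2 <= a -> a <= a' -> Bt a' <= Bt a.
Proof.
intros Ha Haa. apply (IMP_le (bi a') (bi a) 0 1); try lra; try (apply Bt_spec; lra).
intros t Ht. unfold bi. apply Rmult_le_compat_r; [apply Rlt_le, Rpower_pos|]. apply Rpower_dec; lra.
Qed.

Lemma Bt_pos a : 1/2 <= a -> 0 < Bt a.
Proof.
intros Ha. apply (IMP_pos (bi a) 0 1); try lra. apply Bt_spec; auto. apply bi_cont. intros; apply bi_pos.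
Qed.
Lemma nat_big K : exists n : nat, K < INR n.
Proof.
destruct (nfloor_ex (Rabs K) (Rabs_pos K)) as [n Hn]. exists (S n). rewrite S_INR.
assert (K <= Rabs K) by apply RRle_abs. lra.
Qed.

Definition Rf a := Bt a * Gamma (a + /2) / Gamma a.

Lemma Rf_per a : 1/2 <= a -> Rf (a + 1) = Rf a.
Proof.
intros Ha. unfold Rf.
assert (G1 : Gamma (a + 1 + /2) = (a + /2) * Gamma (a + /2)).
{ replace (a + 1 + /2) with ((a + /2) + 1) by ring. apply Gamma_rec; lra. }
assert (G2 : Gamma (a + 1) = a * Gamma a) by (apply Gamma_rec; lra).
assert (B1 := Bt_rec a Ha).
assert (P1 := Gamma_pos a ltac:(lra)). assert (P2 := Gamma_pos (a + /2) ltac:(lra)).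
rewrite G1, G2.
apply Rmult_eq_reg_r with (a * Gamma a); [|nra].
replace (Bt (a + 1) * ((a + / 2) * Gamma (a + / 2)) / (a * Gamma a) * (a * Gamma a))
  with ((a + 1/2) * Bt (a + 1) * Gamma (a + /2)) by (field; lra).
rewrite B1. field. lra.
Qed.

Lemma Rf_per_n a n : 1/2 <= a -> Rf (a + INR n) = Rf a.
Proof.
intros Ha. induction n.
- simpl. rewrite Rplus_0_r; auto.
- rewrite S_INR. replace (a + (INR n + 1)) with ((a + INR n) + 1) by ring.
  rewrite Rf_per; auto. assert (0 <= INR n) by apply pos_INR. lra.
Qed.

Lemma S_bounds c : 1/2 <= c ->
  c * c / (c + /2) <= (Gamma (c + /2) / Gamma c) ^ 2 <= c.
Proof.
intros Hc.
assert (P1 := Gamma_pos c ltac:(lra)). assert (P2 := Gamma_pos (c + /2) ltac:(lra)).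
assert (L1 := Gamma_logconv c ltac:(lra)).
assert (L2 := Gamma_logconv (c + /2) ltac:(lra)).
replace (c + /2 + /2) with (c + 1) in L2 by field.
replace (c + /2 + 1) with ((c + /2) + 1) in L2 by ring.
rewrite Gamma_rec in L1 by lra. rewrite Gamma_rec in L2 by lra. rewrite Gamma_rec in L2 by lra.
set (g := Gamma c) in *. set (h := Gamma (c + /2)) in *.
split.
- apply Rmult_le_reg_r with (c + /2); [lra|].
  replace (c * c / (c + / 2) * (c + / 2)) with (c * c) by (field; lra).
  replace ((h / g) ^ 2 * (c + / 2)) with ((c + /2) * (h * h) / (g * g)) by (field; lra).
  apply Rmult_le_reg_r with (g * g); [nra|].
  replace ((c + / 2) * (h * h) / (g * g) * (g * g)) with ((c + /2) * (h * h)) by (field; lra).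
  nra.
- replace ((h / g) ^ 2) with (h * h / (g * g)) by (field; lra).
  apply Rmult_le_reg_r with (g * g); [nra|].
  replace (h * h / (g * g) * (g * g)) with (h * h) by (field; lra). nra.
Qed.

Lemma num_upper c d Bc Bd S1 S2 : 1 <= c -> c <= d -> 0 < Bd -> Bd <= Bc ->
  Bc * c <= Bd * (c + /2) -> S1 <= c -> d * d / (d + /2) <= S2 ->
  Bc * Bc * S1 <= (1 + 3 / c) * (Bd * Bd * S2).
Proof.
intros H1 H2 H3 H4 H5 H6 H7.
assert (A : Bc * Bc <= Bd * Bd * ((c + /2) / c) ^ 2).
{ assert (Bc <= Bd * ((c + /2) / c)).
  { apply Rmult_le_reg_r with c; [lra|]. replace (Bd * ((c + / 2) / c) * c) with (Bd * (c + /2)) by (field; lra). lra. }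
  assert (0 <= Bc) by lra. replace (Bd * Bd * ((c + / 2) / c) ^ 2) with ((Bd * ((c + / 2) / c)) * (Bd * ((c + / 2) / c))) by ring.
  apply Rmult_le_compat; lra. }
assert (B : S1 <= S2 * ((c + /2) / c)).
{ assert (S2 * ((c + /2) / c) >= d * d / (d + /2) * ((c + /2) / c)).
  { apply Rle_ge, Rmult_le_compat_r; [apply Rlt_le, Rdiv_lt_0_compat; lra| lra]. }
  assert (c <= d * d / (d + /2) * ((c + /2) / c)).
  { replace (d * d / (d + / 2) * ((c + / 2) / c)) with (d * d * (c + /2) / ((d + /2) * c)) by (field; lra).
    apply Rmult_le_reg_r with ((d + /2) * c); [nra|].
    replace (d * d * (c + / 2) / ((d + / 2) * c) * ((d + / 2) * c)) with (d * d * (c + /2)) by (field; lra).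
    assert (0 <= c * d * (d - c)) by (repeat apply Rmult_le_pos; lra). assert (c * c <= d * d) by nra. nra. }
  lra. }
assert (S1p : 0 <= S1 \/ S1 < 0) by lra.
assert (C : ((c + /2) / c) ^ 3 <= 1 + 3 / c).
{ replace ((c + /2) / c) with (1 + / (2 * c)) by (field; lra).
  assert (0 < / (2 * c) <= /2).
  { split. apply Rinv_0_lt_compat; lra. apply Rinv_le_contravar; lra. }
  replace (3 / c) with (6 * / (2 * c)) by (field; lra).
  set (x := / (2 * c)) in *. nra. }
assert (0 <= S2). { apply Rle_trans with (d * d / (d + /2)); auto. apply Rlt_le, Rdiv_lt_0_compat; nra. }
destruct S1p as [S1p|S1n].
- apply Rle_trans with (Bd * Bd * ((c + / 2) / c) ^ 2 * (S2 * ((c + / 2) / c))).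
  + apply Rmult_le_compat; nra.
  + replace (Bd * Bd * ((c + / 2) / c) ^ 2 * (S2 * ((c + / 2) / c))) with ((Bd * Bd * S2) * ((c + /2)/c) ^ 3) by ring.
    rewrite (Rmult_comm (1 + 3 / c)). apply Rmult_le_compat_l; [|lra]. apply Rmult_le_pos; nra.
- assert (Bc * Bc * S1 <= 0) by nra.
  assert (0 <= (1 + 3 / c) * (Bd * Bd * S2)).
  { apply Rmult_le_pos. assert (0 < 3 / c) by (apply Rdiv_lt_0_compat; lra). lra. apply Rmult_le_pos; nra. }
  lra.
Qed.

Lemma num_lower c d Bc Bd S1 S2 : 1 <= c -> c <= d -> d <= c + 1 -> 0 < Bd -> Bd <= Bc ->
  c * c / (c + /2) <= S1 -> 0 <= S2 -> S2 <= d ->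
  (1 - 2 / c) * (Bd * Bd * S2) <= Bc * Bc * S1.
Proof.
intros H1 H2 H3 H4 H5 H6 H7 H8.
assert (A : Bd * Bd <= Bc * Bc) by (apply Rmult_le_compat; lra).
assert (B : (1 - 2 / c) * S2 <= S1).
{ destruct (Rle_or_lt (1 - 2/c) 0) as [N|P].
  - assert (0 < S1). { eapply Rlt_le_trans; [|apply H6]. apply Rdiv_lt_0_compat; nra. } nra.
  - apply Rle_trans with ((1 - 2 / c) * (c + 1)). apply Rmult_le_compat_l; lra.
    apply Rle_trans with (c * c / (c + /2)); auto.
    apply Rmult_le_reg_r with (c * (c + /2)); [nra|].
    replace (c * c / (c + / 2) * (c * (c + / 2))) with (c * c * c) by (field; lra).
    replace ((1 - 2 / c) * (c + 1) * (c * (c + / 2))) with ((c - 2) * (c + 1) * (c + /2)) by (field; lra).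
    nra. }
assert (0 <= S1). { apply Rle_trans with (c * c / (c + /2)); auto. apply Rlt_le, Rdiv_lt_0_compat; nra. }
destruct (Rle_or_lt (1 - 2/c) 0) as [N|P].
- assert ((1 - 2 / c) * (Bd * Bd * S2) <= 0).
  { apply Rmult_le_0_r; auto. apply Rmult_le_pos; nra. }
  assert (0 <= Bc * Bc * S1) by (apply Rmult_le_pos; nra). lra.
- replace ((1 - 2 / c) * (Bd * Bd * S2)) with ((Bd * Bd) * ((1 - 2 / c) * S2)) by ring.
  apply Rmult_le_compat; try nra.
Qed.

Lemma Rf_local a b : 1/2 <= a -> a <= b <= a + 1 -> Rf a = Rf b.
Proof.
intros Ha Hb.
assert (Pa : 0 < Rf a).
{ unfold Rf. pose proof (Bt_pos a Ha). pose proof (Gamma_pos a ltac:(lra)). pose proof (Gamma_pos (a + /2) ltac:(lra)).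
  apply Rdiv_lt_0_compat; [apply Rmult_lt_0_compat|]; auto. }
assert (Pb : 0 < Rf b).
{ unfold Rf. pose proof (Bt_pos b ltac:(lra)). pose proof (Gamma_pos b ltac:(lra)). pose proof (Gamma_pos (b + /2) ltac:(lra)).
  apply Rdiv_lt_0_compat; [apply Rmult_lt_0_compat|]; auto. }
assert (KEY : forall n : nat, 1 <= a + INR n ->
   Rf a * Rf a <= (1 + 3 / (a + INR n)) * (Rf b * Rf b) /\
   (1 - 2 / (a + INR n)) * (Rf b * Rf b) <= Rf a * Rf a).
{ intros n Hn. set (c := a + INR n). set (d := b + INR n).
  assert (Hn0 : 0 <= INR n) by apply pos_INR.
  rewrite <- (Rf_per_n a n Ha), <- (Rf_per_n b n ltac:(lra)). fold c d.
  assert (Sc := S_bounds c ltac:(unfold c; lra)). assert (Sd := S_bounds d ltac:(unfold d; lra)).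
  assert (Gc := Gamma_pos c ltac:(unfold c; lra)). assert (Gd := Gamma_pos d ltac:(unfold d; lra)).
  assert (Bd_pos := Bt_pos d ltac:(unfold d; lra)).
  assert (M1 : Bt d <= Bt c) by (apply Bt_mono; unfold c, d; lra).
  assert (M2 : Bt (c + 1) <= Bt d) by (apply Bt_mono; unfold c, d; lra).
  assert (M3 := Bt_rec c ltac:(unfold c; lra)).
  assert (M4 : Bt c * c <= Bt d * (c + /2)).
  { replace (c + /2) with (c + 1/2) by field. rewrite Rmult_comm, <- M3.
    rewrite (Rmult_comm (Bt d)). apply Rmult_le_compat_l; [unfold c; lra|auto]. }
  assert (E1 : Rf c * Rf c = Bt c * Bt c * (Gamma (c + /2) / Gamma c) ^ 2) by (unfold Rf; field; lra).
  assert (E2 : Rf d * Rf d = Bt d * Bt d * (Gamma (d + /2) / Gamma d) ^ 2) by (unfold Rf; field; lra).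
  rewrite E1, E2. split.
  - apply (num_upper c d); [unfold c; lra|unfold c, d; lra|exact Bd_pos|exact M1|exact M4|apply Sc|apply Sd].
  - apply (num_lower c d); [unfold c; lra|unfold c, d; lra|unfold c, d; lra|exact Bd_pos|exact M1|apply Sc|apply pow2_ge_0|apply Sd]. }
assert (Sq : Rf a * Rf a = Rf b * Rf b).
{ set (X := Rf a * Rf a) in *. set (Y := Rf b * Rf b) in *.
  assert (PY : 0 < Y) by (unfold Y; nra).
  destruct (Rtotal_order X Y) as [Lt|[Eq|Gt]]; auto; exfalso.
  - destruct (nat_big (2 * Y / (Y - X) + Rabs a + 1)) as [n Hn].
    assert (Ra := Rabs_pos a). assert (Rb := RRle_abs (-a)). rewrite Rabs_Ropp in Rb.
    assert (Q : 0 < 2 * Y / (Y - X)) by (apply Rdiv_lt_0_compat; lra).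
    destruct (KEY n ltac:(lra)) as [_ K].
    set (c := a + INR n) in *.
    assert (2 / c * Y < Y - X).
    { assert (2 * Y / (Y - X) < c) by (unfold c; lra).
      apply Rmult_lt_compat_r with (r := Y - X) in H; [|lra].
      replace (2 * Y / (Y - X) * (Y - X)) with (2 * Y) in H by (field; lra).
      apply Rmult_lt_reg_r with c; [unfold c; lra|].
      replace (2 / c * Y * c) with (2 * Y) by (field; unfold c; lra). lra. }
    nra.
  - destruct (nat_big (3 * Y / (X - Y) + Rabs a + 1)) as [n Hn].
    assert (Ra := Rabs_pos a). assert (Rb := RRle_abs (-a)). rewrite Rabs_Ropp in Rb.
    assert (Q : 0 < 3 * Y / (X - Y)) by (apply Rdiv_lt_0_compat; lra).
    destruct (KEY n ltac:(lra)) as [K _].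
    set (c := a + INR n) in *.
    assert (3 / c * Y < X - Y).
    { assert (3 * Y / (X - Y) < c) by (unfold c; lra).
      apply Rmult_lt_compat_r with (r := X - Y) in H; [|lra].
      replace (3 * Y / (X - Y) * (X - Y)) with (3 * Y) in H by (field; lra).
      apply Rmult_lt_reg_r with c; [unfold c; lra|].
      replace (3 / c * Y * c) with (3 * Y) by (field; unfold c; lra). lra. }
    nra. }
nra.
Qed.

Lemma Rf_const a : 1/2 <= a -> Rf a = Rf (1/2).
Proof.
intros Ha.
assert (G : forall n : nat, forall x, 1/2 <= x <= 1/2 + INR n -> Rf x = Rf (1/2)).
{ induction n; intros x Hx.
  - simpl in Hx. replace x with (1/2) by lra. auto.
  - rewrite S_INR in Hx. destruct (Rle_or_lt x (1/2 + INR n)) as [L|L].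
    + apply IHn; lra.
    + assert (0 <= INR n) by apply pos_INR.
      rewrite <- (Rf_local (1/2 + INR n) x); try lra. apply IHn; lra. }
destruct (nat_big a) as [n Hn]. apply (G n). lra.
Qed.

Lemma Rf_value a : 1/2 <= a -> Rf a = sqrt PI.
Proof.
intros Ha.
assert (Prod : Rf (1/2) * Rf 1 = PI).
{ unfold Rf. replace (1/2 + /2) with 1 by field.
  replace (1 + /2) with ((/2) + 1) by ring. rewrite Gamma_rec by lra.
  rewrite Bt_half, Bt_one.
  pose proof (Gamma_pos 1 ltac:(lra)). pose proof (Gamma_pos (1/2) ltac:(lra)).
  replace (/2) with (1/2) by field. field. lra. }
rewrite (Rf_const 1) in Prod by lra.
rewrite (Rf_const a Ha).
assert (0 < Rf (1/2)).
{ unfold Rf. pose proof (Bt_pos (1/2) ltac:(lra)). pose proof (Gamma_pos (1/2) ltac:(lra)). pose proof (Gamma_pos (1/2 + /2) ltac:(lra)).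
  apply Rdiv_lt_0_compat; [apply Rmult_lt_0_compat|]; auto. }
rewrite <- Prod. rewrite sqrt_square; lra.
Qed.

Lemma Bt_value a : 1/2 <= a -> Bt a = sqrt PI * Gamma a / Gamma (a + /2).
Proof.
intros Ha. rewrite <- (Rf_value a Ha). unfold Rf.
pose proof (Gamma_pos a ltac:(lra)). pose proof (Gamma_pos (a + /2) ltac:(lra)). field. lra.
Qed.
Definition psi x t := (1 - 2 * (1 + x) / 5) * ((1 + t) / (1 + x)) / (1 - 2 * (1 + x) / 5 * ((1 + t) / (1 + x))).
Definition dpsi x t := (1 - 2 * (1 + x) / 5) / ((1 + x) * (1 - 2 * (1 + x) / 5 * ((1 + t) / (1 + x))) ^ 2).
Definition Kc gam x := Rpower (1 + x) (gam - 1) / sqrt 5 * Rpower (3 - 2 * x) (- (gam - 1/2)).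
Definition hf m gam x t := Rpower (x - t) (- (1/2)) * Rpower (1 + t) (gam - INR m - 3/2) * g_fun m gam t.

Lemma exp_div_l a b : exp a / exp b = exp (a + - b).
Proof. rewrite exp_plus, exp_Ropp. reflexivity. Qed.

Lemma sqrt_exp x : 0 < x -> sqrt x = exp (1/2 * ln x).
Proof.
intros Hx. rewrite <- (sqrt_square (exp (1/2 * ln x))) by (apply Rlt_le, exp_pos).
f_equal. rewrite <- exp_plus. replace (1/2 * ln x + 1/2 * ln x) with (ln x) by field.
rewrite exp_ln; auto.
Qed.

Lemma key m gam x t : -1 < x <= 1 -> -1 < t < x ->
  Kc gam x * (dpsi x t * bi (gam - 1/2) (psi x t)) = hf m gam x t.
Proof.
intros Hx Ht. unfold psi, dpsi, Kc, hf, g_fun, bi.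
set (w := 1 + x). set (z := 2 * w / 5). set (s := (1 + t) / w).
assert (Hw : 0 < w) by (unfold w; lra).
assert (Hz : 0 < z <= 4/5) by (unfold z, w; split; lra).
assert (Hs : 0 < s < 1).
{ unfold s. split. apply Rdiv_lt_0_compat; lra.
  apply Rmult_lt_reg_r with w; auto. field_simplify; unfold w; lra. }
assert (Hzs : 0 < 1 - z * s) by nra.
assert (H1z : 0 < 1 - z) by lra.
rewrite <- (Rpower_pow m (t + 1)) by lra.
replace (x - t) with (w * (1 - s)) by (unfold s, w; field; lra).
replace (1 + t) with (w * s) by (unfold s; field; lra).
replace (t + 1) with (w * s) by (unfold s; field; lra).
replace (3 - 2 * t) with (5 * (1 - z * s)) by (unfold s, z, w; field; lra).
replace (3 - 2 * x) with (5 * (1 - z)) by (unfold z, w; field).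
replace (1 - (1 - z) * s / (1 - z * s)) with ((1 - s) / (1 - z * s)) by (field; lra).
replace ((1 - z) / (w * (1 - z * s) ^ 2)) with (exp (ln (1 - z) + - ln w + - ln (1 - z * s) + - ln (1 - z * s))).
2:{ rewrite !exp_plus, !exp_Ropp, !exp_ln by lra. field. lra. }
rewrite (sqrt_exp 5) by lra.
unfold Rpower.
rewrite !ln_mult by nra. rewrite !ln_div by nra. rewrite !ln_mult by nra.
rewrite exp_div_l. rewrite <- !exp_plus. f_equal. field.
Qed.
Lemma psi_bounds x t : -1 < x <= 1 -> -1 < t < x ->
  0 < psi x t /\ psi x t <= (1 + t) / (1 + x) /\ psi x t < 1 /\
  1 - psi x t <= (x - t) / ((1 + x) * (1 - 2 * (1 + x) / 5)).
Proof.
intros Hx Ht. unfold psi.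
set (w := 1 + x). set (z := 2 * w / 5). set (s := (1 + t) / w).
assert (Hw : 0 < w) by (unfold w; lra).
assert (Hz : 0 < z <= 4/5) by (unfold z, w; split; lra).
assert (Hs : 0 < s < 1).
{ unfold s. split. apply Rdiv_lt_0_compat; lra.
  apply Rmult_lt_reg_r with w; auto. field_simplify; unfold w; lra. }
assert (Hzs : 0 < 1 - z * s) by nra.
assert (H1z : 0 < 1 - z) by lra.
replace (x - t) with (w * (1 - s)) by (unfold s, w; field; lra).
split; [|split; [|split]].
- apply Rdiv_lt_0_compat; nra.
- apply Rmult_le_reg_r with (1 - z * s); auto.
  replace ((1 - z) * s / (1 - z * s) * (1 - z * s)) with ((1 - z) * s) by (field; lra).
  assert (0 <= z * s * (1 - s)) by (apply Rmult_le_pos; [apply Rmult_le_pos|]; lra). nra.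
- apply Rmult_lt_reg_r with (1 - z * s); auto.
  replace ((1 - z) * s / (1 - z * s) * (1 - z * s)) with ((1 - z) * s) by (field; lra). nra.
- replace (1 - (1 - z) * s / (1 - z * s)) with ((1 - s) / (1 - z * s)) by (field; lra).
  replace (w * (1 - s) / (w * (1 - z))) with ((1 - s) / (1 - z)) by (field; lra).
  apply Rmult_le_reg_r with ((1 - z * s) * (1 - z)); [nra|].
  replace ((1 - s) / (1 - z * s) * ((1 - z * s) * (1 - z))) with ((1 - s) * (1 - z)) by (field; lra).
  replace ((1 - s) / (1 - z) * ((1 - z * s) * (1 - z))) with ((1 - s) * (1 - z * s)) by (field; lra).
  assert (0 <= (1 - s) * z * (1 - s)) by (apply Rmult_le_pos; [apply Rmult_le_pos|]; lra). nra.
Qed.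

Lemma main_IMP m gam x : gam >= INR m + 3/2 -> -1 < x <= 1 ->
  IMP (hf m gam x) (-1) x (Kc gam x * Bt (gam - 1/2)).
Proof.
intros Hg Hx.
assert (Hm := pos_INR m).
set (a := gam - 1/2).
assert (Ha : 1/2 <= a) by (unfold a; lra).
destruct (Bt_anti a Ha) as [F [La [Lb [Hd [Hla [Hlb E]]]]]].
set (K := Kc gam x).
assert (HK : 0 < K).
{ unfold K, Kc. apply Rmult_lt_0_compat; [|apply Rpower_pos].
  apply Rdiv_lt_0_compat; [apply Rpower_pos|apply sqrt_lt_R0; lra]. }
rewrite E. replace (K * (Lb - La)) with (K * Lb - K * La) by ring.
set (z := 2 * (1 + x) / 5).
assert (H1z : 0 < 1 - z) by (unfold z; lra).
apply IMP_ftc with (fun t => K * F (psi x t)); try lra.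
- intros t Ht. destruct (psi_bounds x t Hx Ht) as [P1 [P2 [P3 P4]]].
  assert (Hps : is_derive (psi x) t (dpsi x t)).
  { unfold psi, dpsi. auto_derive.
    - repeat split; try lra. apply Rgt_not_eq.
      assert (0 < (1 + t) / (1 + x) < 1).
      { split. apply Rdiv_lt_0_compat; lra. apply Rmult_lt_reg_r with (1 + x); [lra|]. field_simplify; lra. }
      fold z. nra.
    - assert (0 < (1 + t) / (1 + x) < 1).
      { split. apply Rdiv_lt_0_compat; lra. apply Rmult_lt_reg_r with (1 + x); [lra|]. field_simplify; lra. }
      fold z. assert (0 < 1 - z * ((1 + t) / (1 + x))) by nra.
      field. split; [lra|].
      replace (1 + x - z * (1 + t)) with ((1 + x) * (1 - z * ((1 + t) / (1 + x)))) by (field; lra).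
      apply Rgt_not_eq. apply Rmult_lt_0_compat; lra. }
  rewrite <- (key m gam x t Hx Ht). fold a K.
  apply is_derive_scal.
  apply (is_derive_comp F (psi x) t (bi a (psi x t)) (dpsi x t)); auto.
- intros t Ht. apply (@ex_derive_continuous R_AbsRing R_NormedModule).
  unfold hf, g_fun, Rpower. auto_derive. repeat split; lra.
- intros eps He. destruct (Hla (eps / K)) as [d [Hd0 Kd]]; [apply Rdiv_lt_0_compat; lra|].
  exists (Rmin (d * (1 + x)) (1 + x)). split; [apply Rmin_glb_lt; nra|].
  intros t Ht. assert (m1 := Rmin_l (d * (1 + x)) (1 + x)). assert (m2 := Rmin_r (d * (1 + x)) (1 + x)).
  destruct (psi_bounds x t Hx ltac:(lra)) as [P1 [P2 [P3 P4]]].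
  assert (psi x t < d).
  { apply Rle_lt_trans with ((1 + t) / (1 + x)); auto.
    apply Rmult_lt_reg_r with (1 + x); [lra|]. field_simplify; lra. }
  specialize (Kd (psi x t) ltac:(lra)).
  replace (K * F (psi x t) - K * La) with (K * (F (psi x t) - La)) by ring.
  rewrite Rabs_mult, Rabs_pos_eq by lra.
  apply Rmult_lt_reg_r with (/ K); [apply Rinv_0_lt_compat; lra|].
  replace (K * Rabs (F (psi x t) - La) * / K) with (Rabs (F (psi x t) - La)) by (field; lra).
  exact Kd.
- intros eps He. destruct (Hlb (eps / K)) as [d [Hd0 Kd]]; [apply Rdiv_lt_0_compat; lra|].
  exists (Rmin (d * ((1 + x) * (1 - z))) (1 + x)). split; [apply Rmin_glb_lt; try lra; apply Rmult_lt_0_compat; nra|].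
  intros t Ht. assert (m1 := Rmin_l (d * ((1 + x) * (1 - z))) (1 + x)). assert (m2 := Rmin_r (d * ((1 + x) * (1 - z))) (1 + x)).
  destruct (psi_bounds x t Hx ltac:(lra)) as [P1 [P2 [P3 P4]]]. fold z in P4.
  assert (1 - psi x t < d).
  { apply Rle_lt_trans with ((x - t) / ((1 + x) * (1 - z))); auto.
    apply Rmult_lt_reg_r with ((1 + x) * (1 - z)); [nra|]. field_simplify; try lra. }
  specialize (Kd (psi x t) ltac:(lra)).
  replace (K * F (psi x t) - K * Lb) with (K * (F (psi x t) - Lb)) by ring.
  rewrite Rabs_mult, Rabs_pos_eq by lra.
  apply Rmult_lt_reg_r with (/ K); [apply Rinv_0_lt_compat; lra|].
  replace (K * Rabs (F (psi x t) - Lb) * / K) with (Rabs (F (psi x t) - Lb)) by (field; lra).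
  exact Kd.
Qed.
Lemma part1 (m : nat) (gam : R) : gam >= INR m + 3/2 ->
     forall x : R, -1 < x <= 1 ->
       I_plus_eq (gam - INR m - 3/2) (g_fun m gam) x
         (sqrt (PI / 5) * (Gamma (gam - 1/2) / Gamma gam)
            * (x + 1) ^ (m + 1) * Rpower (3 - 2 * x) (- (gam - 1/2))).
Proof.
intros Hg x Hx. assert (Hm := pos_INR m).
exists (Kc gam x * Bt (gam - 1/2)). split.
- exact (IMP_to _ _ _ _ (main_IMP m gam x Hg Hx)).
- rewrite Bt_value by lra. replace (gam - 1/2 + /2) with gam by field.
  unfold Kc.
  assert (G1 := Gamma_pos gam ltac:(lra)).
  assert (S5 : 0 < sqrt 5) by (apply sqrt_lt_R0; lra).
  rewrite sqrt_div_alt by lra.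
  assert (E : Rpower (1 + x) (- (gam - INR m - 3 / 2) + 1 / 2) * Rpower (1 + x) (gam - 1) = (x + 1) ^ (m + 1)).
  { rewrite <- Rpower_plus. replace (- (gam - INR m - 3 / 2) + 1 / 2 + (gam - 1)) with (INR (m + 1)).
    - rewrite Rpower_pow by lra. f_equal. ring.
    - rewrite plus_INR. simpl. field. }
  rewrite <- E. field. lra.
Qed.

Theorem mainTheorem11 :
  (forall (m : nat) (gam : R), gam >= INR m + 3/2 ->
     forall x : R, -1 < x <= 1 ->
       I_plus_eq (gam - INR m - 3/2) (g_fun m gam) x
         (sqrt (PI / 5) * (Gamma (gam - 1/2) / Gamma gam)
            * (x + 1) ^ (m + 1) * Rpower (3 - 2 * x) (- (gam - 1/2))))
  /\
  (forall lam : R, lam >= 0 ->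
     forall x : R, -1 < x <= 1 ->
       I_plus_eq lam (phi_fun lam) x
         (sqrt (PI / 5) * (Gamma (lam + 1) / Gamma (lam + 3/2))
            * (x + 1) * Rpower (3 - 2 * x) (- (lam + 1)))).
Proof.
split.
- exact part1.
- intros lam Hl x Hx.
  assert (H := part1 0 (lam + 3/2) ltac:(simpl; lra) x Hx).
  replace (lam + 3 / 2 - INR 0 - 3 / 2) with lam in H by (simpl; field).
  replace (g_fun 0 (lam + 3 / 2)) with (phi_fun lam) in H.
  + replace (lam + 3 / 2 - 1 / 2) with (lam + 1) in H by field.
    replace ((x + 1) ^ (0 + 1)) with (x + 1) in H by (simpl; ring). exact H.
  + apply functional_extensionality. intros t. unfold g_fun, phi_fun. simpl.
    rewrite Rmult_1_l. f_equal. field.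
Qed.
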